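(* Let $G$ be a connected bipartite circulant graph and let $n\ge 1$. Then $K_{n,n} \otimes G$ is a circulant graph.
   Context: Graphs have no multiple edges but may have loops. The tensor product $G \otimes H$ of graphs $G$ and $H$ has vertex set $V(G)\times V(H)$, with $(g,h)$ adjacent to $(g',h')$ if and only if $g$ is adjacent to $g'$ in $G$ and $h$ is adjacent to $h'$ in $H$. $K_{n,n}$ denotes the complete bipartite graph with both parts of size $n$. For an integer $N\ge 1$ and a set $S$ of integers, the circulant graph $C_NS$ has vertex set $\{0,1,\dots,N-1\}$, with $i$ adjacent to $j$ if and only if $i-j \equiv \pm s \pmod N$ for some $s\in S$. A graph is circulant if it is isomorphic to some $C_NS$ (this includes disconnected graphs); equivalently, if it has an automorphism that permutes all its vertices in a single cycle. *)

(* Defs.v *)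
(* Finite graphs: a finType of vertices with a symmetric
   boolean adjacency relation (loops allowed, no multiple edges). *)
From mathcomp Require Import all_boot all_order all_algebra.
Set Implicit Arguments. Unset Strict Implicit. Unset Printing Implicit Defensive.
Import GRing.Theory Num.Theory.

Definition is_graph (T : finType) (e : rel T) : Prop := symmetric e.

Definition connected_graph (T : finType) (e : rel T) : Prop :=
  0 < #|T| /\ forall x y : T, connect e x y.

Definition bipartite (T : finType) (e : rel T) : Prop :=
  exists c : T -> bool, forall x y : T, e x y -> c x != c y.

Definition circ_adj (N : nat) (S : int -> Prop) (i j : nat) : Prop :=
  exists s : int, S s /\
    ((((i%:Z - j%:Z) %% N%:Z)%Z = (s %% N%:Z)%Z) \/
     (((i%:Z - j%:Z) %% N%:Z)%Z = ((- s) %% N%:Z)%Z)).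

Definition circulant (T : finType) (e : rel T) : Prop :=
  exists (N : nat) (S : int -> Prop) (f : T -> 'I_N),
    0 < N /\ bijective f /\
    forall x y : T, e x y <-> circ_adj N S (f x) (f y).

(* K_{n,n}: vertex set bool * 'I_n (side, index); edges between the two sides. *)
Definition Knn (n : nat) : rel (bool * 'I_n) := fun x y => x.1 != y.1.
Arguments Knn n : clear implicits.

Definition tensor (T1 T2 : finType) (e1 : rel T1) (e2 : rel T2) : rel (T1 * T2) :=
  fun x y => e1 x.1 y.1 && e2 x.2 y.2.

(* Main.v *)
Require Import Defs.
From mathcomp Require Import all_boot all_order all_algebra.
From mathcomp Require Import zify.
Set Implicit Arguments. Unset Strict Implicit. Unset Printing Implicit Defensive.
Import GRing.Theory Num.Theory.

Lemma modz_eq_ex (d a b : int) :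
  (a %% d)%Z = (b %% d)%Z -> exists q : int, (a - b = q * d)%R.
Proof.
move=> H; apply/dvdzP; rewrite -eqz_mod_dvd; exact/eqP.
Qed.

Lemma ex_modz_eq (d a b : int) (q : int) :
  (a - b = q * d)%R -> (a %% d)%Z = (b %% d)%Z.
Proof.
move=> H; apply/eqP; rewrite eqz_mod_dvd; apply/dvdzP; by exists q.
Qed.

Theorem theorem7 (T : finType) (e : rel T) (n : nat) :
  is_graph e -> connected_graph e -> bipartite e -> circulant e ->
  0 < n -> circulant (tensor (Knn n) e).
Proof.
move=> _ _ [c Hc] [N [S [f [N0 [fbij Hf]]]]] n0.
have Flt : forall u : (bool * 'I_n) * T,
  2 * (u.1.2 * N + f u.2) + (u.1.1 (+) c u.2) < 2 * n * N.
  move=> [[b k] x] /=.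
  have h1 : k.+1 * N <= n * N by rewrite leq_mul2r ltn_ord orbT.
  have := ltn_ord (f x); have := leq_b1 (b (+) c x).
  rewrite mulSn in h1; lia.
pose F u := Ordinal (Flt u).
exists (2 * n * N), (fun t => exists s m : int, S s /\ t = (2 * (s + m * N%:Z))%R), F.
split; first nia.
split.
  apply: inj_card_bij; last first.
    by rewrite !card_prod card_bool card_ord (bij_eq_card fbij) ?card_ord.
  move=> [[b k] x] [[b' k'] y] /(congr1 val) /= H.
  have := ltn_ord k; have := ltn_ord (f x); have := leq_b1 (b (+) c x).
  have := ltn_ord k'; have := ltn_ord (f y); have := leq_b1 (b' (+) c y).
  move=> h1 h2 h3 h4 h5 h6.
  have Er : (b (+) c x) = (b' (+) c y) :> nat by lia.
  have Ek : k = k' :> nat by nia.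
  have Ef : f x = f y :> nat by nia.
  have Exy : x = y by apply: (bij_inj fbij); apply: val_inj.
  subst y.
  have -> : k = k' by apply: val_inj.
  congr (_, _, _); move: Er; clear; by case: b b' => [] [] /=; case: (c x).
move=> [[b k] x] [[b' k'] y]; rewrite /tensor /Knn /=.
have := leq_b1 (b (+) c x); have := leq_b1 (b' (+) c y).
move=> hr hr'.
split.
- move=> /andP [bb' exy].
  have cxy := Hc _ _ exy.
  have Er : (b (+) c x) = (b' (+) c y) :> nat.
    by case: b b' bb' {hr hr'} => [] [] //= _; case: (c x) (c y) cxy => [] [].
  move/Hf: exy => [s [Ss [H|H]]].
  + have [q Hq] := modz_eq_ex H.
    exists (2 * (s + (q + k%:Z - k'%:Z) * N%:Z))%R; split.
      by exists s, (q + k%:Z - k'%:Z)%R.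
    left; apply: (@ex_modz_eq _ _ _ 0).
    rewrite /= !PoszD !PoszM Er; lia.
  + have [q Hq] := modz_eq_ex H.
    exists (2 * (s + (- (q + k%:Z - k'%:Z)) * N%:Z))%R; split.
      by exists s, (- (q + k%:Z - k'%:Z))%R.
    right; apply: (@ex_modz_eq _ _ _ 0).
    rewrite /= !PoszD !PoszM Er; lia.
- move=> [t [[s [m [Ss ->]]] H]].
  rewrite /= in H.
  suff [Er exy] : (b (+) c x) = (b' (+) c y) :> nat /\ e x y.
    rewrite exy andbT.
    have := Hc _ _ exy; move: Er; clear.
    by case: b b' => [] [] /=; case: (c x); case: (c y).
  case: H => H; have [q Hq] := modz_eq_ex H; rewrite !PoszD !PoszM in Hq.
  + have Er : (b (+) c x) = (b' (+) c y) :> nat by lia.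
    split => //; apply/Hf; exists s; split => //; left.
    apply: (@ex_modz_eq _ _ _ (q * n%:Z + m + k'%:Z - k%:Z)); lia.
  + have Er : (b (+) c x) = (b' (+) c y) :> nat by lia.
    split => //; apply/Hf; exists s; split => //; right.
    apply: (@ex_modz_eq _ _ _ (q * n%:Z - m + k'%:Z - k%:Z)); lia.
Qed.
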